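(* Let $\mathbf{c}\in\mathbb{R}^n_{\ge0}$, $0<r\le1$ with $\|\mathbf{c}\|_1\le r$, let $0<\delta\le1$ and $M=\lceil 4n^2\delta^{-1}\rceil$. Then $$\Psi_n(1,r)\le G_n(1,r)\le(1+\delta)\Psi_n(1,r).$$
   Context: Given $\mathbf{c}=(c_1,\dots,c_n)$, define $\Psi_0(u,v)=1$ if $u\ge0$ and $v\ge0$, and $0$ otherwise, and for $i=1,\dots,n$, $\Psi_i(u,v)=\int_{-1}^1\Psi_{i-1}(u-|s|,\,v-|s-c_i|)\,ds$. Given additionally $r>0$ and a positive integer $M$, define $G_0=\Psi_0$ and, inductively for $i=1,\dots,n$: $\overline G_i(u,v)=\int_{-1}^1G_{i-1}(u-|s|,\,v-|s-c_i|)\,ds$, and $G_i(u,v)=\overline G_i\big(\tfrac1M\lceil Mu\rceil,\ \tfrac rM\lceil \tfrac Mr v\rceil\big)$ if $u>0$ and $v>0$, while $G_i(u,v)=0$ otherwise (a staircase approximation of $\overline G_i$ on the grid $\tfrac1M\mathbb{Z}\times\tfrac rM\mathbb{Z}$). *)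

(* Defs.v *)
From Stdlib Require Import Reals Lra ZArith ClassicalEpsilon.
Open Scope R_scope.

(* Integral over [a,b]: the Riemann integral (independent of the
   integrability proof); chosen by Hilbert epsilon, it agrees with
   RiemannInt whenever f is Riemann integrable on [a,b]. All integrands
   arising below are Riemann integrable (piecewise monotone / step). *)
Definition Rint (f : R -> R) (a b : R) : R :=
  epsilon (inhabits 0)
    (fun I => exists pr : Riemann_integrable f a b, RiemannInt pr = I).

Definition Rfloor (x : R) : Z := Int_part x.
Definition Rceil (x : R) : Z := (- Rfloor (- x))%Z.

(* c is 1-indexed: c 1, ..., c n are used. *)
Definition Psi0 (u v : R) : R :=
  if Rle_dec 0 u then (if Rle_dec 0 v then 1 else 0) else 0.

Fixpoint Psi (c : nat -> R) (i : nat) : R -> R -> R :=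
  match i with
  | O => Psi0
  | S k => fun u v =>
      Rint (fun s => Psi c k (u - Rabs s) (v - Rabs (s - c (S k)))) (-1) 1
  end.

(* staircase approximation on the grid (1/M)Z x (r/M)Z *)
Fixpoint G (c : nat -> R) (r : R) (M : nat) (i : nat) : R -> R -> R :=
  match i with
  | O => Psi0
  | S k => fun u v =>
      let Gbar := fun u' v' =>
        Rint (fun s => G c r M k (u' - Rabs s) (v' - Rabs (s - c (S k)))) (-1) 1 in
      if Rlt_dec 0 u then
        if Rlt_dec 0 v then
          Gbar (/ INR M * IZR (Rceil (INR M * u)))
               (r / INR M * IZR (Rceil (INR M / r * v)))
        else 0
      else 0
  end.

Fixpoint l1norm (c : nat -> R) (n : nat) : R :=
  match n with
  | O => 0
  | S m => l1norm c m + Rabs (c (S m))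
  end.

(* Main.v *)
Require Import Defs.
From Stdlib Require Import Reals ZArith Lra Lia ClassicalEpsilon Classical.
From Coquelicot Require Import Coquelicot.
Open Scope R_scope.


Lemma Rint_RInt (f : R -> R) a b : ex_RInt f a b -> Rint f a b = RInt f a b.
Proof.
  intros H. unfold Rint.
  assert (Hex : exists I, exists pr : Riemann_integrable f a b, RiemannInt pr = I).
  { exists (RiemannInt (ex_RInt_Reals_0 f a b H)). eexists; reflexivity. }
  destruct (epsilon_spec (inhabits 0) _ Hex) as [pr Hpr].
  rewrite <- Hpr. symmetry. apply RInt_Reals.
Qed.

Lemma Rceil_spec x : IZR (Rceil x) - 1 < x <= IZR (Rceil x).
Proof.
  unfold Rceil, Rfloor, Int_part. rewrite opp_IZR, minus_IZR.
  destruct (archimed (-x)) as [H1 H2]. lra.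
Qed.

Lemma Rceil_unique x k : IZR k - 1 < x <= IZR k -> Rceil x = k.
Proof.
  intros [H1 H2]. unfold Rceil, Rfloor, Int_part.
  assert (E : (- k + 1)%Z = up (- x)).
  { apply tech_up; rewrite plus_IZR, opp_IZR; simpl; lra. }
  rewrite <- E. lia.
Qed.

Lemma Rceil_le x y : x <= y -> (Rceil x <= Rceil y)%Z.
Proof.
  intros H. destruct (Rceil_spec x), (Rceil_spec y).
  destruct (Z_le_gt_dec (Rceil x) (Rceil y)) as [h|h]; auto.
  assert (IZR (Rceil y) <= IZR (Rceil x) - 1).
  { rewrite <- minus_IZR. apply IZR_le. lia. }
  lra.
Qed.

Lemma Rceil_pos x : (0 < Rceil x)%Z <-> 0 < x.
Proof.
  destruct (Rceil_spec x) as [h1 h2]. split; intro H.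
  - destruct (Rle_lt_dec x 0); [|lra].
    assert (Rceil x < 1)%Z. { apply lt_IZR. lra. } lia.
  - apply lt_IZR. lra.
Qed.

Definition ind (lo hi : R) (s : R) : R :=
  if Rle_dec lo s then if Rle_dec s hi then 1 else 0 else 0.

Lemma RInt_const_R (a b k : R) : RInt (fun _ => k) a b = (b - a) * k :> R.
Proof. rewrite RInt_const. reflexivity. Qed.

Lemma ex_RInt_const_on (f : R -> R) a b k : (forall x, Rmin a b < x < Rmax a b -> f x = k) -> ex_RInt f a b.
Proof.
  intros H. apply ex_RInt_ext with (fun _ => k).
  - intros; symmetry; auto.
  - apply ex_RInt_const.
Qed.

Lemma RInt_const_on (f : R -> R) a b k : (forall x, Rmin a b < x < Rmax a b -> f x = k) -> RInt f a b = (b - a) * k :> R.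
Proof.
  intros H. rewrite (RInt_ext f (fun _ => k)). apply RInt_const_R. auto.
Qed.

Lemma RInt_Chasles_R (f : R -> R) a b c : ex_RInt f a b -> ex_RInt f b c -> RInt f a b + RInt f b c = RInt f a c :> R.
Proof. intros; apply (RInt_Chasles f a b c); auto. Qed.

Lemma ind_RInt lo hi a b : a <= b ->
  ex_RInt (ind lo hi) a b /\ RInt (ind lo hi) a b = Rmax 0 (Rmin hi b - Rmax lo a) :> R.
Proof.
  intros Hab. set (l := Rmax lo a). set (h := Rmin hi b).
  assert (Hl : a <= l /\ lo <= l) by (unfold l, Rmax; destruct Rle_dec; lra).
  assert (Hh : h <= b /\ h <= hi) by (unfold h, Rmin; destruct Rle_dec; lra).
  assert (Hl2 : l = lo \/ l = a) by (unfold l, Rmax; destruct Rle_dec; auto).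
  assert (Hh2 : h = hi \/ h = b) by (unfold h, Rmin; destruct Rle_dec; auto).
  destruct (Rlt_le_dec h l) as [Hlt|Hle].
  - assert (Z : forall x, Rmin a b < x < Rmax a b -> ind lo hi x = 0).
    { intros x Hx. rewrite Rmin_left, Rmax_right in Hx by lra.
      unfold ind. destruct Rle_dec; [destruct Rle_dec|]; auto.
      exfalso. destruct Hl2, Hh2; lra. }
    split. eapply ex_RInt_const_on; eauto.
    rewrite (RInt_const_on _ _ _ 0 Z). rewrite Rmax_left by lra. ring.
  - assert (Z1 : forall x, Rmin a l < x < Rmax a l -> ind lo hi x = 0).
    { intros x Hx. rewrite Rmin_left, Rmax_right in Hx by lra.
      unfold ind. destruct Rle_dec; [destruct Rle_dec|]; auto.
      exfalso. destruct Hl2; lra. }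
    assert (Z2 : forall x, Rmin l h < x < Rmax l h -> ind lo hi x = 1).
    { intros x Hx. rewrite Rmin_left, Rmax_right in Hx by lra.
      unfold ind. destruct Rle_dec; [destruct Rle_dec|]; auto; exfalso; lra. }
    assert (Z3 : forall x, Rmin h b < x < Rmax h b -> ind lo hi x = 0).
    { intros x Hx. rewrite Rmin_left, Rmax_right in Hx by lra.
      unfold ind. destruct Rle_dec; [destruct Rle_dec|]; auto.
      exfalso. destruct Hh2; lra. }
    assert (E1 := ex_RInt_const_on _ _ _ _ Z1).
    assert (E2 := ex_RInt_const_on _ _ _ _ Z2).
    assert (E3 := ex_RInt_const_on _ _ _ _ Z3).
    assert (E12 : ex_RInt (ind lo hi) a h) by (eapply ex_RInt_Chasles; eauto).
    split. eapply ex_RInt_Chasles; eauto.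
    rewrite <- (RInt_Chasles_R _ a h b) by auto.
    rewrite <- (RInt_Chasles_R _ a l h) by auto.
    rewrite (RInt_const_on _ _ _ _ Z1), (RInt_const_on _ _ _ _ Z2), (RInt_const_on _ _ _ _ Z3).
    rewrite Rmax_right by lra. fold l h. ring.
Qed.

Lemma locstep_int (f : R -> R) a b : a <= b ->
  (forall x, a <= x <= b -> exists e, 0 < e /\ exists c1 c2,
     (forall y, x - e < y < x -> f y = c1) /\ (forall y, x < y < x + e -> f y = c2)) ->
  ex_RInt f a b.
Proof.
  intros Hab Hloc.
  set (E := fun t => a <= t <= b /\ ex_RInt f a t).
  assert (HB : bound E) by (exists b; intros t [Ht _]; lra).
  assert (HE : exists x, E x) by (exists a; split; [lra| apply ex_RInt_point]).
  destruct (completeness E HB HE) as [s [Hub Hlub]].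
  assert (Has : a <= s) by (apply Hub; split; [lra|apply ex_RInt_point]).
  assert (Hsb : s <= b) by (apply Hlub; intros t [Ht _]; lra).
  destruct (Hloc s (conj Has Hsb)) as [e [He [c1 [c2 [Hc1 Hc2]]]]].
  assert (Hs : ex_RInt f a s).
  { destruct (Req_dec s a) as [->|Hne]; [apply ex_RInt_point|].
    set (e' := Rmin e (s - a)).
    assert (He' : 0 < e' /\ e' <= e /\ e' <= s - a) by (unfold e', Rmin; destruct Rle_dec; lra).
    assert (Hex : exists t, E t /\ s - e' < t).
    { apply NNPP; intro Hn.
      assert (s <= s - e'); [|lra].
      apply Hlub. intros t Ht. destruct (Rle_lt_dec t (s - e')); auto.
      exfalso; apply Hn; exists t; auto. }
    destruct Hex as [t [[Ht1 Ht2] Ht3]].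
    assert (Hts : t <= s) by (apply Hub; split; auto).
    destruct (Req_dec t s) as [<-|Hts']; auto.
    apply ex_RInt_Chasles_0 with t; [lra|auto|].
    apply ex_RInt_const_on with c1.
    intros x Hx; rewrite Rmin_left, Rmax_right in Hx by lra. apply Hc1; lra. }
  destruct (Req_dec s b) as [<-|Hne]; auto.
  exfalso.
  set (t2 := Rmin (s + e/2) b).
  assert (Ht2 : s < t2 /\ t2 <= b /\ t2 <= s + e / 2) by (unfold t2, Rmin; destruct Rle_dec; lra).
  assert (E t2).
  { split; [lra|]. apply ex_RInt_Chasles_0 with s; [lra|auto|].
    apply ex_RInt_const_on with c2.
    intros x Hx; rewrite Rmin_left, Rmax_right in Hx by lra. apply Hc2; lra. }
  assert (t2 <= s) by (apply Hub; auto). lra.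
Qed.

Lemma ceil_right x0 : exists eta, 0 < eta /\ exists k, forall x, x0 < x < x0 + eta -> Rceil x = k.
Proof.
  destruct (Rceil_spec x0) as [h1 h2].
  destruct (Req_dec x0 (IZR (Rceil x0))) as [E|E].
  - exists 1. split; [lra|]. exists (Rceil x0 + 1)%Z. intros x Hx.
    apply Rceil_unique. rewrite plus_IZR. lra.
  - exists (IZR (Rceil x0) - x0). split; [lra|]. exists (Rceil x0). intros x Hx.
    apply Rceil_unique. lra.
Qed.

Lemma ceil_left x0 : exists eta, 0 < eta /\ forall x, x0 - eta < x <= x0 -> Rceil x = Rceil x0.
Proof.
  destruct (Rceil_spec x0) as [h1 h2].
  exists (x0 - (IZR (Rceil x0) - 1)). split; [lra|]. intros x Hx.
  apply Rceil_unique. lra.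
Qed.

Definition twoside (g : R -> Z) (s0 : R) := exists e, 0 < e /\ exists k1 k2,
  (forall s, s0 - e < s < s0 -> g s = k1) /\ (forall s, s0 < s < s0 + e -> g s = k2).

Lemma twoside_shrink (g : R -> Z) s0 e : 0 < e ->
  (exists k1 k2, (forall s, s0 - e < s < s0 -> g s = k1) /\ (forall s, s0 < s < s0 + e -> g s = k2)) ->
  forall e', 0 < e' <= e ->
  exists k1 k2, (forall s, s0 - e' < s < s0 -> g s = k1) /\ (forall s, s0 < s < s0 + e' -> g s = k2).
Proof.
  intros He [k1 [k2 [H1 H2]]] e' He'. exists k1, k2; split; intros; [apply H1|apply H2]; lra.
Qed.

Lemma twoside_affine al be s0 : twoside (fun s => Rceil (al + be * s)) s0.
Proof.
  set (x0 := al + be * s0).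
  destruct (ceil_right x0) as [eR [HeR [kR HR]]].
  destruct (ceil_left x0) as [eL [HeL HL]].
  destruct (Rtotal_order be 0) as [Hb|[Hb|Hb]].
  - exists (Rmin (eR / - be) (eL / - be)).
    assert (P1 : 0 < eR / - be) by (apply Rdiv_lt_0_compat; lra).
    assert (P2 : 0 < eL / - be) by (apply Rdiv_lt_0_compat; lra).
    assert (Hm : 0 < Rmin (eR / - be) (eL / - be) /\ Rmin (eR / - be) (eL / - be) <= eR / - be
      /\ Rmin (eR / - be) (eL / - be) <= eL / - be) by (unfold Rmin; destruct Rle_dec; lra).
    set (m := Rmin (eR / - be) (eL / - be)) in *.
    split; [lra|]. exists kR, (Rceil x0). split; intros s Hs.
    + apply HR. unfold x0. split; [nra|].
      assert (- be * (s0 - s) < - be * m) by (apply Rmult_lt_compat_l; lra).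
      assert (- be * m <= eR).
      { apply Rle_trans with (- be * (eR / - be)). apply Rmult_le_compat_l; lra.
        right; field; lra. }
      nra.
    + apply HL. unfold x0. split; [|nra].
      assert (- be * (s - s0) < - be * m) by (apply Rmult_lt_compat_l; lra).
      assert (- be * m <= eL).
      { apply Rle_trans with (- be * (eL / - be)). apply Rmult_le_compat_l; lra.
        right; field; lra. }
      nra.
  - subst be. exists 1. split; [lra|]. exists (Rceil x0), (Rceil x0).
    split; intros; unfold x0; f_equal; ring.
  - exists (Rmin (eR / be) (eL / be)).
    assert (P1 : 0 < eR / be) by (apply Rdiv_lt_0_compat; lra).
    assert (P2 : 0 < eL / be) by (apply Rdiv_lt_0_compat; lra).
    assert (Hm : 0 < Rmin (eR / be) (eL / be) /\ Rmin (eR / be) (eL / be) <= eR / be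
      /\ Rmin (eR / be) (eL / be) <= eL / be) by (unfold Rmin; destruct Rle_dec; lra).
    set (m := Rmin (eR / be) (eL / be)) in *.
    split; [lra|]. exists (Rceil x0), kR. split; intros s Hs.
    + apply HL. unfold x0. split; [|nra].
      assert (be * (s0 - s) < be * m) by (apply Rmult_lt_compat_l; lra).
      assert (be * m <= eL).
      { apply Rle_trans with (be * (eL / be)). apply Rmult_le_compat_l; lra.
        right; field; lra. }
      nra.
    + apply HR. unfold x0. split; [nra|].
      assert (be * (s - s0) < be * m) by (apply Rmult_lt_compat_l; lra).
      assert (be * m <= eR).
      { apply Rle_trans with (be * (eR / be)). apply Rmult_le_compat_l; lra.
        right; field; lra. }
      nra.
Qed.

Lemma twoside_abs p q c0 s0 : twoside (fun s => Rceil (p + q * Rabs (s - c0))) s0.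
Proof.
  destruct (Rtotal_order s0 c0) as [H|[H|H]].
  - destruct (twoside_affine (p + q * c0) (- q) s0) as [e [He Hk]].
    exists (Rmin e (c0 - s0)).
    assert (Hm : 0 < Rmin e (c0 - s0) <= e /\ Rmin e (c0 - s0) <= c0 - s0) by (unfold Rmin; destruct Rle_dec; lra).
    split; [lra|].
    destruct (twoside_shrink _ _ _ He Hk (Rmin e (c0 - s0))) as [k1 [k2 [H1 H2]]]; [lra|].
    exists k1, k2. split; intros s Hs.
    + rewrite <- (H1 s) by lra. f_equal. rewrite Rabs_left by lra. ring.
    + rewrite <- (H2 s) by lra. f_equal. rewrite Rabs_left by lra. ring.
  - subst s0.
    destruct (twoside_affine (p + q * c0) (- q) c0) as [e1 [He1 [a1 [a2 [A1 A2]]]]].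
    destruct (twoside_affine (p - q * c0) q c0) as [e2 [He2 [b1 [b2 [B1 B2]]]]].
    exists (Rmin e1 e2).
    assert (Hm : 0 < Rmin e1 e2 /\ Rmin e1 e2 <= e1 /\ Rmin e1 e2 <= e2) by (unfold Rmin; destruct Rle_dec; lra).
    split; [lra|]. exists a1, b2. split; intros s Hs.
    + rewrite <- (A1 s) by lra. f_equal. rewrite Rabs_left by lra. ring.
    + rewrite <- (B2 s) by lra. f_equal. rewrite Rabs_right by lra. ring.
  - destruct (twoside_affine (p - q * c0) q s0) as [e [He Hk]].
    exists (Rmin e (s0 - c0)).
    assert (Hm : 0 < Rmin e (s0 - c0) <= e /\ Rmin e (s0 - c0) <= s0 - c0) by (unfold Rmin; destruct Rle_dec; lra).
    split; [lra|].
    destruct (twoside_shrink _ _ _ He Hk (Rmin e (s0 - c0))) as [k1 [k2 [H1 H2]]]; [lra|].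
    exists k1, k2. split; intros s Hs.
    + rewrite <- (H1 s) by lra. f_equal. rewrite Rabs_right by lra. ring.
    + rewrite <- (H2 s) by lra. f_equal. rewrite Rabs_right by lra. ring.
Qed.

Definition Gbar c r M k x y :=
  Rint (fun s => G c r M k (x - Rabs s) (y - Rabs (s - c (S k)))) (-1) 1.

Lemma G_S c r M k x y : G c r M (S k) x y =
  if Rlt_dec 0 x then if Rlt_dec 0 y then
    Gbar c r M k (/ INR M * IZR (Rceil (INR M * x))) (r / INR M * IZR (Rceil (INR M / r * y)))
  else 0 else 0.
Proof. reflexivity. Qed.

Lemma pos_scale m x : 0 < m -> (0 < x <-> 0 < m * x).
Proof. intros Hm; split; intro H; [nra|]. destruct (Rle_lt_dec x 0); [|auto]. nra. Qed.

Lemma G_congr c r M k x y x' y' : 0 < INR M -> 0 < r ->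
  Rceil (INR M * x) = Rceil (INR M * x') -> Rceil (INR M / r * y) = Rceil (INR M / r * y') ->
  G c r M (S k) x y = G c r M (S k) x' y'.
Proof.
  intros HM Hr Ex Ey. rewrite !G_S, Ex, Ey.
  assert (HMr : 0 < INR M / r) by (apply Rdiv_lt_0_compat; auto).
  assert (Px : 0 < x <-> 0 < x').
  { rewrite (pos_scale (INR M) x HM), (pos_scale (INR M) x' HM), <- !Rceil_pos, Ex. tauto. }
  assert (Py : 0 < y <-> 0 < y').
  { rewrite (pos_scale _ y HMr), (pos_scale _ y' HMr), <- !Rceil_pos, Ey. tauto. }
  destruct (Rlt_dec 0 x), (Rlt_dec 0 x'), (Rlt_dec 0 y), (Rlt_dec 0 y'); tauto.
Qed.

Lemma G_int c r M k U V c0 a b : 0 < INR M -> 0 < r -> a <= b ->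
  ex_RInt (fun s => G c r M (S k) (U - Rabs s) (V - Rabs (s - c0))) a b.
Proof.
  intros HM Hr Hab. apply locstep_int; auto. intros s0 _.
  destruct (twoside_abs (INR M * U) (- INR M) 0 s0) as [e1 [He1 [a1 [a2 [A1 A2]]]]].
  destruct (twoside_abs (INR M / r * V) (- (INR M / r)) c0 s0) as [e2 [He2 [b1 [b2 [B1 B2]]]]].
  set (e := Rmin e1 e2).
  assert (Hm : 0 < e /\ e <= e1 /\ e <= e2) by (unfold e, Rmin; destruct Rle_dec; lra).
  assert (EA : forall s, Rceil (INR M * (U - Rabs s)) = Rceil (INR M * U + - INR M * Rabs (s - 0))).
  { intros; f_equal. rewrite Rminus_0_r. ring. }
  assert (EB : forall s, Rceil (INR M / r * (V - Rabs (s - c0))) = Rceil (INR M / r * V + - (INR M / r) * Rabs (s - c0))).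
  { intros; f_equal. ring. }
  exists e. split; [lra|].
  exists (G c r M (S k) (U - Rabs (s0 - e/2)) (V - Rabs (s0 - e/2 - c0))).
  exists (G c r M (S k) (U - Rabs (s0 + e/2)) (V - Rabs (s0 + e/2 - c0))).
  split; intros y Hy; apply G_congr; auto.
  - rewrite !EA, (A1 y), (A1 (s0 - e/2)); auto; lra.
  - rewrite !EB, (B1 y), (B1 (s0 - e/2)); auto; lra.
  - rewrite !EA, (A2 y), (A2 (s0 + e/2)); auto; lra.
  - rewrite !EB, (B2 y), (B2 (s0 + e/2)); auto; lra.
Qed.

Lemma Psi0_ind U V c0 s : Psi0 (U - Rabs s) (V - Rabs (s - c0)) = ind (Rmax (-U) (c0 - V)) (Rmin U (c0 + V)) s.
Proof.
  unfold Psi0, ind, Rmax, Rmin.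
  destruct (Rle_dec (-U) (c0 - V)); destruct (Rle_dec U (c0 + V));
  unfold Rabs; destruct (Rcase_abs s); destruct (Rcase_abs (s - c0));
  repeat destruct Rle_dec; lra.
Qed.

Lemma ex_RInt_gen_le (f : R -> R) : (forall a b, a <= b -> ex_RInt f a b) -> forall a b, ex_RInt f a b.
Proof.
  intros H a b. destruct (Rle_dec a b). auto. apply ex_RInt_swap. apply H. lra.
Qed.

Lemma Psi0_int U V c0 a b : ex_RInt (fun s => Psi0 (U - Rabs s) (V - Rabs (s - c0))) a b.
Proof.
  revert a b. apply ex_RInt_gen_le. intros a b Hab.
  apply ex_RInt_ext with (ind (Rmax (-U) (c0 - V)) (Rmin U (c0 + V))).
  intros; rewrite Psi0_ind; auto. apply ind_RInt; auto.
Qed.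

Definition F1 (c0 u v : R) := Rmax 0 (Rmin (Rmin u (c0 + v)) 1 - Rmax (Rmax (-u) (c0 - v)) (-1)).

Lemma Psi_1 c u v : Psi c 1 u v = F1 (c 1%nat) u v.
Proof.
  change (Psi c 1 u v) with (Rint (fun s => Psi0 (u - Rabs s) (v - Rabs (s - c 1%nat))) (-1) 1).
  rewrite Rint_RInt by apply Psi0_int.
  rewrite (RInt_ext _ (ind (Rmax (-u) (c 1%nat - v)) (Rmin u (c 1%nat + v)))).
  2: intros; apply Psi0_ind.
  destruct (ind_RInt (Rmax (-u) (c 1%nat - v)) (Rmin u (c 1%nat + v)) (-1) 1) as [_ ->]; [lra|].
  reflexivity.
Qed.

Lemma Rmin_lip a b a' b' : Rabs (Rmin a b - Rmin a' b') <= Rabs (a - a') + Rabs (b - b').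
Proof. unfold Rmin; repeat destruct Rle_dec; unfold Rabs; repeat destruct Rcase_abs; lra. Qed.
Lemma Rmax_lip a b a' b' : Rabs (Rmax a b - Rmax a' b') <= Rabs (a - a') + Rabs (b - b').
Proof. unfold Rmax; repeat destruct Rle_dec; unfold Rabs; repeat destruct Rcase_abs; lra. Qed.

Lemma F1_lip c0 u v u' v' : Rabs (F1 c0 u v - F1 c0 u' v') <= 2 * (Rabs (u - u') + Rabs (v - v')).
Proof.
  unfold F1.
  set (A := Rmin (Rmin u (c0 + v)) 1). set (A' := Rmin (Rmin u' (c0 + v')) 1).
  set (B := Rmax (Rmax (-u) (c0 - v)) (-1)). set (B' := Rmax (Rmax (-u') (c0 - v')) (-1)).
  assert (HA : Rabs (A - A') <= Rabs (u - u') + Rabs (v - v')).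
  { unfold A, A'. eapply Rle_trans. apply Rmin_lip. rewrite Rminus_diag, Rabs_R0, Rplus_0_r.
    eapply Rle_trans. apply Rmin_lip. replace (c0 + v - (c0 + v')) with (v - v') by ring. lra. }
  assert (HB : Rabs (B - B') <= Rabs (u - u') + Rabs (v - v')).
  { unfold B, B'. eapply Rle_trans. apply Rmax_lip. rewrite Rminus_diag, Rabs_R0, Rplus_0_r.
    eapply Rle_trans. apply Rmax_lip. replace (c0 - v - (c0 - v')) with (-(v - v')) by ring.
    replace (- u - - u') with (- (u - u')) by ring. rewrite !Rabs_Ropp. lra. }
  eapply Rle_trans. apply Rmax_lip. rewrite Rminus_diag, Rabs_R0, Rplus_0_l.
  replace (A - B - (A' - B')) with ((A - A') - (B - B')) by ring.
  eapply Rle_trans. apply Rabs_triang. rewrite Rabs_Ropp. lra.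
Qed.

Lemma lip_int (F : R -> R -> R) L : 0 <= L ->
  (forall u v u' v', Rabs (F u v - F u' v') <= L * (Rabs (u - u') + Rabs (v - v'))) ->
  forall U V c0 a b, ex_RInt (fun s => F (U - Rabs s) (V - Rabs (s - c0))) a b.
Proof.
  intros HL HF U V c0 a b. apply (ex_RInt_continuous (V := R_CompleteNormedModule)). intros z _.
  apply continuity_pt_filterlim.
  intros eps Heps. exists (eps / (2 * L + 1)). split.
  { apply Rdiv_lt_0_compat; lra. }
  intros x [_ Hx]. simpl in *. unfold R_dist in *.
  eapply Rle_lt_trans. apply HF.
  replace (U - Rabs x - (U - Rabs z)) with (Rabs z - Rabs x) by ring.
  replace (V - Rabs (x - c0) - (V - Rabs (z - c0))) with (Rabs (z - c0) - Rabs (x - c0)) by ring.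
  assert (H1 : Rabs (Rabs z - Rabs x) <= Rabs (x - z)).
  { rewrite (Rabs_minus_sym x z). apply Rabs_triang_inv2. }
  assert (H2 : Rabs (Rabs (z - c0) - Rabs (x - c0)) <= Rabs (x - z)).
  { replace (x - z) with (- ((z - c0) - (x - c0))) by ring. rewrite Rabs_Ropp. apply Rabs_triang_inv2. }
  assert (Hx' : Rabs (x - z) * (2 * L + 1) < eps).
  { apply Rmult_lt_reg_r with (/ (2 * L + 1)). apply Rinv_0_lt_compat; lra.
    rewrite Rmult_assoc, Rinv_r by lra. lra. }
  assert (0 <= Rabs (x - z)) by apply Rabs_pos.
  nra.
Qed.

Lemma Psi_S c k u v : Psi c (S k) u v = Rint (fun s => Psi c k (u - Rabs s) (v - Rabs (s - c (S k)))) (-1) 1.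
Proof. reflexivity. Qed.

Lemma RInt_minus_R (f g : R -> R) a b : ex_RInt f a b -> ex_RInt g a b ->
  RInt f a b - RInt g a b = RInt (fun x => f x - g x) a b :> R.
Proof. intros Hf Hg. symmetry. apply (RInt_minus f g a b Hf Hg). Qed.

Lemma Psi_lip c k : forall u v u' v', Rabs (Psi c (S k) u v - Psi c (S k) u' v') <= 2 ^ (S k) * (Rabs (u - u') + Rabs (v - v')).
Proof.
  induction k as [|k IH]; intros u v u' v'.
  - rewrite !Psi_1. simpl. rewrite Rmult_1_r. apply F1_lip.
  - rewrite !(Psi_S c (S k)).
    assert (HL : 0 <= 2 ^ S k) by (apply pow_le; lra).
    rewrite !Rint_RInt by (apply lip_int with (2 ^ S k); auto).
    rewrite RInt_minus_R by (apply lip_int with (2 ^ S k); auto).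
    eapply Rle_trans. apply abs_RInt_le_const with (M := 2 ^ S k * (Rabs (u - u') + Rabs (v - v'))).
    lra. apply (ex_RInt_minus (V := R_NormedModule)); apply lip_int with (2 ^ S k); auto.
    intros t _. eapply Rle_trans. apply IH.
    replace (u - Rabs t - (u' - Rabs t)) with (u - u') by ring.
    replace (v - Rabs (t - c (S (S k))) - (v' - Rabs (t - c (S (S k))))) with (v - v') by ring. lra.
    change (2 ^ S (S k)) with (2 * 2 ^ S k). lra.
Qed.

Lemma Psi_int c k U V c0 a b : ex_RInt (fun s => Psi c k (U - Rabs s) (V - Rabs (s - c0))) a b.
Proof.
  destruct k as [|k]. apply Psi0_int.
  apply lip_int with (2 ^ S k). apply pow_le; lra. apply Psi_lip.
Qed.

Lemma Psi_nonneg c k u v : 0 <= Psi c k u v.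
Proof.
  revert u v; induction k as [|k IH]; intros u v.
  - simpl. unfold Psi0. repeat destruct Rle_dec; lra.
  - rewrite Psi_S, Rint_RInt by apply Psi_int.
    apply RInt_ge_0; [lra|apply Psi_int|]. intros; apply IH.
Qed.

Lemma Psi_mono c k u v u' v' : u <= u' -> v <= v' -> Psi c k u v <= Psi c k u' v'.
Proof.
  revert u v u' v'; induction k as [|k IH]; intros u v u' v' Hu Hv.
  - simpl. unfold Psi0. repeat destruct Rle_dec; lra.
  - rewrite !Psi_S, !Rint_RInt by apply Psi_int.
    apply RInt_le; [lra|apply Psi_int|apply Psi_int|]. intros; apply IH; lra.
Qed.

Lemma Psi_zero c k x y : x <= 0 \/ y <= 0 -> Psi c (S k) x y = 0.
Proof.
  revert x y; induction k as [|k IH]; intros x y H.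
  - rewrite Psi_1. unfold F1, Rmax, Rmin. destruct H; repeat destruct Rle_dec; lra.
  - rewrite Psi_S, Rint_RInt by apply Psi_int.
    rewrite (RInt_const_on _ _ _ 0). ring.
    intros t _. apply IH. assert (0 <= Rabs t) by apply Rabs_pos.
    assert (0 <= Rabs (t - c (S (S k)))) by apply Rabs_pos. lra.
Qed.

Section GProps.
Variables (c : nat -> R) (r : R) (M : nat).
Hypothesis HM : 0 < INR M.
Hypothesis Hr : 0 < r.

Lemma G_int_all k U V c0 a b : ex_RInt (fun s => G c r M k (U - Rabs s) (V - Rabs (s - c0))) a b.
Proof.
  destruct k as [|k]. apply Psi0_int.
  revert a b. apply ex_RInt_gen_le. intros. apply G_int; auto.
Qed.

Lemma G_nonneg k x y : 0 <= G c r M k x y.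
Proof.
  revert x y; induction k as [|k IH]; intros x y.
  - simpl. unfold Psi0. repeat destruct Rle_dec; lra.
  - rewrite G_S. destruct Rlt_dec; [destruct Rlt_dec|]; try lra.
    unfold Gbar. rewrite Rint_RInt by apply G_int_all.
    apply RInt_ge_0; [lra|apply G_int_all|]. intros; apply IH.
Qed.

Lemma rnd_u x : x <= / INR M * IZR (Rceil (INR M * x)) <= x + / INR M.
Proof.
  destruct (Rceil_spec (INR M * x)) as [h1 h2].
  assert (HMi : 0 < / INR M) by (apply Rinv_0_lt_compat; auto).
  split.
  - apply Rmult_le_reg_l with (INR M); auto. rewrite <- Rmult_assoc, Rinv_r by lra. lra.
  - apply Rmult_le_reg_l with (INR M); auto. rewrite <- Rmult_assoc, Rinv_r by lra.
    rewrite Rmult_plus_distr_l, Rinv_r by lra. lra.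
Qed.

Lemma rnd_v y : y <= r / INR M * IZR (Rceil (INR M / r * y)) <= y + r / INR M.
Proof.
  destruct (Rceil_spec (INR M / r * y)) as [h1 h2].
  assert (HMr : 0 < INR M / r) by (apply Rdiv_lt_0_compat; auto).
  assert (E : r / INR M = / (INR M / r)) by (field; lra).
  rewrite E. split.
  - apply Rmult_le_reg_l with (INR M / r); auto. rewrite <- Rmult_assoc, Rinv_r by lra. lra.
  - apply Rmult_le_reg_l with (INR M / r); auto. rewrite <- Rmult_assoc, Rinv_r by lra.
    rewrite Rmult_plus_distr_l, Rinv_r by lra. lra.
Qed.

Lemma rnd_u_mono x x' : x <= x' -> / INR M * IZR (Rceil (INR M * x)) <= / INR M * IZR (Rceil (INR M * x')).
Proof.
  intros H. apply Rmult_le_compat_l. left; apply Rinv_0_lt_compat; auto.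
  apply IZR_le, Rceil_le. apply Rmult_le_compat_l; lra.
Qed.

Lemma rnd_v_mono y y' : y <= y' -> r / INR M * IZR (Rceil (INR M / r * y)) <= r / INR M * IZR (Rceil (INR M / r * y')).
Proof.
  intros H. assert (HMr : 0 < INR M / r) by (apply Rdiv_lt_0_compat; auto).
  apply Rmult_le_compat_l. left; apply Rdiv_lt_0_compat; auto.
  apply IZR_le, Rceil_le. apply Rmult_le_compat_l; lra.
Qed.

Lemma G_mono k x y x' y' : x <= x' -> y <= y' -> G c r M k x y <= G c r M k x' y'.
Proof.
  revert x y x' y'; induction k as [|k IH]; intros x y x' y' Hx Hy.
  - simpl. unfold Psi0. repeat destruct Rle_dec; lra.
  - destruct (Rlt_dec 0 x) as [px|px]; [|rewrite G_S; destruct (Rlt_dec 0 x); [lra|apply G_nonneg]].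
    destruct (Rlt_dec 0 y) as [py|py]; [|rewrite G_S; destruct (Rlt_dec 0 x); [|lra];
       destruct (Rlt_dec 0 y); [lra|apply G_nonneg]].
    rewrite !G_S. destruct (Rlt_dec 0 x); [|lra]. destruct (Rlt_dec 0 y); [|lra].
    destruct (Rlt_dec 0 x'); [|lra]. destruct (Rlt_dec 0 y'); [|lra].
    unfold Gbar. rewrite !Rint_RInt by apply G_int_all.
    apply RInt_le; [lra|apply G_int_all|apply G_int_all|]. intros t _; apply IH.
    assert (H := rnd_u_mono x x' Hx). lra.
    assert (H := rnd_v_mono y y' Hy). lra.
Qed.

Lemma LB k x y : Psi c k x y <= G c r M k x y.
Proof.
  revert x y; induction k as [|k IH]; intros x y.
  - simpl. lra.
  - destruct (Rle_lt_dec x 0) as [hx|hx].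
    { rewrite Psi_zero by auto. apply G_nonneg. }
    destruct (Rle_lt_dec y 0) as [hy|hy].
    { rewrite Psi_zero by auto. apply G_nonneg. }
    rewrite G_S. destruct (Rlt_dec 0 x); [|lra]. destruct (Rlt_dec 0 y); [|lra].
    rewrite Psi_S. unfold Gbar. rewrite Rint_RInt by apply Psi_int. rewrite Rint_RInt by apply G_int_all.
    apply RInt_le; [lra|apply Psi_int|apply G_int_all|]. intros t _.
    eapply Rle_trans. apply IH. apply G_mono.
    assert (H := rnd_u x). lra. assert (H := rnd_v y). lra.
Qed.

Lemma UB k x y : G c r M k x y <= Psi c k (x + INR k / INR M) (y + INR k * r / INR M).
Proof.
  revert x y; induction k as [|k IH]; intros x y.
  - simpl. replace (x + 0 / INR M) with x by (field; lra).
    replace (y + 0 * r / INR M) with y by (field; lra). lra.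
  - rewrite G_S. destruct (Rlt_dec 0 x); [|apply Psi_nonneg]. destruct (Rlt_dec 0 y); [|apply Psi_nonneg].
    rewrite Psi_S. unfold Gbar. rewrite Rint_RInt by apply G_int_all. rewrite Rint_RInt by apply Psi_int.
    apply RInt_le; [lra|apply G_int_all|apply Psi_int|]. intros t _.
    eapply Rle_trans. apply IH. apply Psi_mono.
    + assert (H := rnd_u x). rewrite S_INR.
      replace ((INR k + 1) / INR M) with (INR k / INR M + / INR M) by (field; lra). lra.
    + assert (H := rnd_v y). rewrite S_INR.
      replace ((INR k + 1) * r / INR M) with (INR k * r / INR M + r / INR M) by (field; lra). lra.
Qed.

End GProps.



Lemma scal_R (a b : R) : scal a b = a * b.
Proof. reflexivity. Qed.

Lemma RInt_scal_R (g : R -> R) a b k : ex_RInt g a b -> RInt (fun y => k * g y) a b = k * RInt g a b :> R.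
Proof. intros H. apply (RInt_scal g a b k H). Qed.

Lemma l1norm_S c k : l1norm c (S k) = l1norm c k + Rabs (c (S k)).
Proof. reflexivity. Qed.

Lemma homot c mu k : 1 <= mu -> (forall i, (1 <= i <= k)%nat -> 0 <= c i <= 1) ->
  forall U V, Psi c k U V <= mu ^ k * Psi c k (U / mu + l1norm c k / 2 * (1 - / mu)) (V / mu + l1norm c k / 2 * (1 - / mu)).
Proof.
  intros Hmu. assert (Hmu0 : 0 < mu) by lra.
  assert (Hi : 0 < / mu <= 1).
  { split. apply Rinv_0_lt_compat; lra. rewrite <- Rinv_1. apply Rinv_le_contravar; lra. }
  assert (Hmi : mu * / mu = 1) by (field; lra).
  induction k as [|k IH]; intros Hc U V.
  - simpl.
    replace (U / mu + 0 / 2 * (1 - / mu)) with (U * / mu) by (field; lra).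
    replace (V / mu + 0 / 2 * (1 - / mu)) with (V * / mu) by (field; lra).
    rewrite Rmult_1_l. unfold Psi0. repeat destruct Rle_dec; try lra; exfalso; nra.
  - assert (Hck : 0 <= c (S k) <= 1) by (apply Hc; lia).
    specialize (IH (fun i Hi' => Hc i ltac:(lia))).
    rewrite l1norm_S, (Rabs_pos_eq (c (S k))) by lra.
    set (C := c (S k)) in *. set (p := C / 2). set (w := 1 - / mu).
    set (h := l1norm c k / 2).
    assert (Hw : 0 <= w < 1) by (unfold w; lra).
    assert (Hp : 0 <= p <= 1/2) by (unfold p; lra).
    set (sm := p + (-1 - p) * / mu). set (sp := p + (1 - p) * / mu). set (v0 := (1 - mu) * p).
    assert (Hsm : mu * sm + v0 = -1) by (unfold sm, v0; field; lra).
    assert (Hsp : mu * sp + v0 = 1) by (unfold sp, v0; field; lra).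
    assert (Hsm1 : -1 <= sm).
    { replace sm with (-1 + (1 + p) * w) by (unfold sm, w; ring). assert (0 <= (1+p)*w) by (apply Rmult_le_pos; lra). lra. }
    assert (Hsp1 : sp <= 1).
    { replace sp with (1 - (1 - p) * w) by (unfold sp, w; ring). assert (0 <= (1-p)*w) by (apply Rmult_le_pos; lra). lra. }
    assert (Hsmp : sm <= sp).
    { unfold sm, sp. assert (0 <= 2 * / mu) by lra. nra. }
    set (U' := U / mu + (l1norm c k + C) / 2 * w).
    set (V' := V / mu + (l1norm c k + C) / 2 * w).
    set (f := fun s => Psi c k (U - Rabs s) (V - Rabs (s - C))).
    set (g := fun s => Psi c k (U' - Rabs s) (V' - Rabs (s - C))).
    rewrite !Psi_S. fold C.
    rewrite (Rint_RInt (fun s => Psi c k (U - Rabs s) (V - Rabs (s - C)))) by apply Psi_int.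
    rewrite (Rint_RInt (fun s => Psi c k (U' - Rabs s) (V' - Rabs (s - C)))) by apply Psi_int.
    fold f g.
    replace (RInt f (-1) 1) with (RInt f (mu * sm + v0) (mu * sp + v0)) by (rewrite Hsm, Hsp; reflexivity).
    rewrite <- RInt_comp_lin by (rewrite Hsm, Hsp; apply Psi_int).
    apply Rle_trans with (RInt (fun y => mu ^ S k * g y) sm sp).
    + apply RInt_le; auto.
      * apply (ex_RInt_comp_lin (V:=R_NormedModule) f mu v0 sm sp). rewrite Hsm, Hsp. apply Psi_int.
      * apply (ex_RInt_scal (V := R_NormedModule) g sm sp (mu ^ S k)). apply Psi_int.
      * intros y _. rewrite scal_R. unfold f, g.
        eapply Rle_trans. apply Rmult_le_compat_l. lra. apply IH.
        change (mu ^ S k) with (mu * mu ^ k). rewrite Rmult_assoc.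
        apply Rmult_le_compat_l. lra. apply Rmult_le_compat_l. apply pow_le; lra.
        assert (E1 : mu * y + v0 = mu * (y - p * w)) by (unfold v0, w; field; lra).
        assert (E2 : mu * y + v0 - C = mu * (y - C + p * w)) by (unfold v0, w, p; field; lra).
        rewrite E2, E1, !Rabs_mult, (Rabs_pos_eq mu) by lra.
        assert (Hq : 0 <= p * w) by (apply Rmult_le_pos; lra).
        fold h w. unfold U', V'.
        replace ((U - mu * Rabs (y - p * w)) / mu) with (U / mu - Rabs (y - p * w)) by (field; lra).
        replace ((V - mu * Rabs (y - C + p * w)) / mu) with (V / mu - Rabs (y - C + p * w)) by (field; lra).
        replace ((l1norm c k + C) / 2 * w) with (h * w + p * w) by (unfold h, p; field).
        set (q := p * w) in *.
        apply Psi_mono; unfold Rabs; repeat destruct Rcase_abs; lra.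
    + rewrite (RInt_scal_R g sm sp (mu ^ S k)) by apply Psi_int. apply Rmult_le_compat_l. apply pow_le; lra.
      assert (G0 : forall a b, a <= b -> 0 <= RInt g a b).
      { intros a b Hab. apply RInt_ge_0; auto. apply Psi_int. intros; apply Psi_nonneg. }
      rewrite <- (RInt_Chasles_R g (-1) sm 1) by apply Psi_int.
      rewrite <- (RInt_Chasles_R g sm sp 1) by apply Psi_int.
      assert (0 <= RInt g (-1) sm) by (apply G0; lra).
      assert (0 <= RInt g sp 1) by (apply G0; lra). lra.
Qed.


Lemma l1norm_nonneg c k : 0 <= l1norm c k.
Proof. induction k; simpl. lra. assert (0 <= Rabs (c (S k))) by apply Rabs_pos. lra. Qed.

Lemma c_le_l1 c k i : (1 <= i <= k)%nat -> c i <= l1norm c k.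
Proof.
  induction k as [|k IH]; intros Hi. lia.
  rewrite l1norm_S. destruct (Nat.eq_dec i (S k)) as [->|Hne].
  - assert (H := l1norm_nonneg c k). assert (c (S k) <= Rabs (c (S k))) by apply RRle_abs. lra.
  - assert (c i <= l1norm c k) by (apply IH; lia). assert (0 <= Rabs (c (S k))) by apply Rabs_pos. lra.
Qed.

Lemma pow_bound n y : 0 <= y -> (1 + y) ^ n * (1 - INR n * y) <= 1.
Proof.
  intros Hy. induction n as [|n IH]. simpl. lra.
  rewrite S_INR. simpl.
  assert (P : 0 <= (1 + y) ^ n) by (apply pow_le; lra).
  assert (E : (1 + y) * (1 + y) ^ n * (1 - (INR n + 1) * y) = (1 + y) ^ n * (1 - INR n * y) - (1 + y) ^ n * ((INR n + 1) * y * y)) by ring.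
  rewrite E. assert (0 <= INR n) by apply pos_INR.
  assert (0 <= (1 + y) ^ n * ((INR n + 1) * y * y)).
  { apply Rmult_le_pos; auto. apply Rmult_le_pos; [apply Rmult_le_pos|]; lra. }
  lra.
Qed.

Theorem mainTheorem18 (n : nat) (c : nat -> R) (r delta : R) :
  (forall i : nat, (1 <= i <= n)%nat -> 0 <= c i) ->
  0 < r -> r <= 1 ->
  l1norm c n <= r ->
  0 < delta -> delta <= 1 ->
  let M := Z.to_nat (Rceil (4 * INR n ^ 2 / delta)) in
  Psi c n 1 r <= G c r M n 1 r /\ G c r M n 1 r <= (1 + delta) * Psi c n 1 r.
Proof.
  intros Hc Hr0 Hr1 Hl Hd0 Hd1 M.
  destruct n as [|n'].
  { simpl. unfold Psi0. repeat destruct Rle_dec; lra. }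
  set (n := S n') in *.
  assert (Hn : 1 <= INR n) by (unfold n; rewrite S_INR; assert (0 <= INR n') by apply pos_INR; lra).
  set (X := 4 * INR n ^ 2 / delta).
  assert (HX : 0 < X) by (unfold X; apply Rdiv_lt_0_compat; [nra|lra]).
  destruct (Rceil_spec X) as [hc1 hc2].
  assert (HMeq : INR M = IZR (Rceil X)).
  { unfold M. rewrite INR_IZR_INZ. f_equal. apply Z2Nat.id. apply le_IZR. lra. }
  assert (HMX : X <= INR M) by lra.
  assert (HM : 0 < INR M) by lra.
  split.
  - apply LB; auto.
  - eapply Rle_trans. apply UB; auto.
    set (e := INR n / INR M).
    assert (He : 0 < e) by (unfold e; apply Rdiv_lt_0_compat; lra).
    replace (1 + INR n / INR M) with (1 + e) by reflexivity.
    replace (r + INR n * r / INR M) with (r + r * e) by (unfold e; field; lra).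
    set (mu := 1 + 2 * e).
    assert (Hc' : forall i, (1 <= i <= n)%nat -> 0 <= c i <= 1).
    { intros i Hi. split. auto. assert (H := c_le_l1 c n i Hi). lra. }
    eapply Rle_trans. apply (homot c mu n); auto. unfold mu; lra.
    set (h := l1norm c n / 2).
    assert (Hh : 0 <= h <= r / 2) by (unfold h; assert (H := l1norm_nonneg c n); lra).
    assert (Hmu : 0 < mu) by (unfold mu; lra).
    assert (E1 : (1 + e) / mu + h * (1 - / mu) = (1 + e + 2 * e * h) / mu) by (unfold mu; field; lra).
    assert (E2 : (r + r * e) / mu + h * (1 - / mu) = (r + r * e + 2 * e * h) / mu) by (unfold mu; field; lra).
    rewrite E1, E2.
    assert (Hmon : Psi c n ((1 + e + 2 * e * h) / mu) ((r + r * e + 2 * e * h) / mu) <= Psi c n 1 r).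
    { apply Psi_mono.
      - apply Rmult_le_reg_l with mu; auto. unfold Rdiv. rewrite <- Rmult_assoc, (Rmult_comm mu), Rmult_assoc, Rinv_r by lra.
        unfold mu. nra.
      - apply Rmult_le_reg_l with mu; auto. unfold Rdiv. rewrite <- Rmult_assoc, (Rmult_comm mu), Rmult_assoc, Rinv_r by lra.
        unfold mu. nra. }
    assert (Hpow : mu ^ n <= 1 + delta).
    { assert (Hb := pow_bound n (2 * e) ltac:(lra)). fold mu in Hb.
      assert (Hny : INR n * (2 * e) <= delta / 2).
      { unfold e. replace (INR n * (2 * (INR n / INR M))) with (2 * INR n ^ 2 / INR M) by (field; lra).
        apply Rmult_le_reg_l with (INR M); auto.
        replace (INR M * (2 * INR n ^ 2 / INR M)) with (2 * INR n ^ 2) by (field; lra).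
        assert (delta * X = 4 * INR n ^ 2) by (unfold X; field; lra).
        nra. }
      assert (P : 0 <= mu ^ n) by (apply pow_le; lra).
      assert (mu ^ n * (1 - delta / 2) <= 1) by nra.
      nra. }
    assert (Hps := Psi_nonneg c n 1 r).
    assert (Hps2 := Psi_nonneg c n ((1 + e + 2 * e * h) / mu) ((r + r * e + 2 * e * h) / mu)).
    assert (P : 0 <= mu ^ n) by (apply pow_le; lra).
    apply Rle_trans with (mu ^ n * Psi c n 1 r).
    apply Rmult_le_compat_l; auto. apply Rmult_le_compat_r; auto.
Qed.
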